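(* Let $\alpha\ge1$, $\beta$ odd, and let ${\cal C}=\langle (b\mid 0),(\ell\mid fh+2f)\rangle\subseteq R_{\alpha,\beta}$ be a $\mathbb{Z}_2\mathbb{Z}_4$-additive cyclic code, where $f,h,g\in\mathbb{Z}_4[x]$ with $fhg=x^\beta-1$, $b\in\mathbb{Z}_2[x]$ divides $x^\alpha-1$, and $\ell\in\mathbb{Z}_2[x]/(x^\alpha-1)$. Then there exists $\ell'\in\mathbb{Z}_2[x]/(x^\alpha-1)$ such that ${\cal C}=\langle (b\mid 0),(\ell\tilde g\mid 2fg),(\ell'\mid fh)\rangle$.
   Context: $R_{\alpha,\beta}=\mathbb{Z}_2[x]/(x^\alpha-1)\times\mathbb{Z}_4[x]/(x^\beta-1)$ is a $\mathbb{Z}_4[x]$-module via $p\star(b\mid a)=(\tilde pb\mid pa)$, where $\tilde p\in\mathbb{Z}_2[x]$ is the reduction of $p$ mod 2. A $\mathbb{Z}_2\mathbb{Z}_4$-additive cyclic code is a $\mathbb{Z}_4[x]$-submodule of $R_{\alpha,\beta}$; $\langle\cdot\rangle$ denotes the generated submodule. *)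

(* Defs.v *)
From HB Require Import structures.
From mathcomp Require Import all_boot all_algebra.
Set Implicit Arguments. Unset Strict Implicit. Unset Printing Implicit Defensive.
Import GRing.Theory.
Local Open Scope ring_scope.

Definition redZ4 (z : 'Z_4) : 'F_2 := (val z)%:R.
Definition redp (p : {poly 'Z_4}) : {poly 'F_2} := map_poly redZ4 p.

(* Elements of R_{alpha,beta} are represented by pairs (b | a) of polynomial
   representatives in Z2[x] x Z4[x]; two pairs represent the same element iff
   they are congruent mod (x^alpha - 1, x^beta - 1).
   [in_code alpha beta G v] : the class of v lies in the Z4[x]-submodule <G>
   of R_{alpha,beta} generated by the (classes of the) pairs in G, for the
   action p * (b | a) = (~p b | p a). *)
Definition in_code (alpha beta : nat) (G : seq ({poly 'F_2} * {poly 'Z_4}))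
  (v : {poly 'F_2} * {poly 'Z_4}) : Prop :=
  exists c : nat -> {poly 'Z_4},
    (exists q2 : {poly 'F_2},
      v.1 = \sum_(i < size G) redp (c i) * (nth (0, 0) G i).1
            + q2 * ('X^alpha - 1))
    /\ (exists q4 : {poly 'Z_4},
      v.2 = \sum_(i < size G) c i * (nth (0, 0) G i).2
            + q4 * ('X^beta - 1)).

Definition code_eq (alpha beta : nat) (G1 G2 : seq ({poly 'F_2} * {poly 'Z_4})) : Prop :=
  forall v, in_code alpha beta G1 v <-> in_code alpha beta G2 v.

(* Main.v *)
Require Import Defs.
From HB Require Import structures.
From mathcomp Require Import all_boot all_algebra.
From mathcomp Require Import ring.
Import GRing.Theory.
Local Open Scope ring_scope.
Lemma redZ4_sub : zmod_morphism redZ4.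
Proof. move=> [[|[|[|[|m]]]] Hx] [[|[|[|[|n]]]] Hy] //; apply/val_inj => //. Qed.
Lemma redZ4_mul : monoid_morphism redZ4.
Proof. split; first by apply/val_inj. move=> [[|[|[|[|m]]]] Hx] [[|[|[|[|n]]]] Hy] //; apply/val_inj => //. Qed.
HB.instance Definition _ := GRing.isZmodMorphism.Build _ _ redZ4 redZ4_sub.
HB.instance Definition _ := GRing.isMonoidMorphism.Build _ _ redZ4 redZ4_mul.

Lemma redpM p q : redp (p * q) = redp p * redp q. Proof. exact: rmorphM. Qed.
Lemma redpD p q : redp (p + q) = redp p + redp q. Proof. exact: rmorphD. Qed.
Lemma redpB p q : redp (p - q) = redp p - redp q. Proof. exact: rmorphB. Qed.
Lemma redp1 : redp 1 = 1. Proof. exact: rmorph1. Qed.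
Lemma redpXn n : redp ('X^n) = 'X^n. Proof. exact: map_polyXn. Qed.

Lemma F2_two (p : {poly 'F_2}) : p *+ 2 = 0.
Proof.
apply/polyP => i; rewrite coefMn coef0; move: (p`_i) => [[|[|k]] H] //; exact/val_inj.
Qed.
Lemma F2_opp (p : {poly 'F_2}) : - p = p.
Proof. by rewrite -[LHS]addr0 -(F2_two p) mulr2n addrA addNr add0r. Qed.
Lemma Z4_four (p : {poly 'Z_4}) : p *+ 4 = 0.
Proof.
apply/polyP => i; rewrite coefMn coef0; move: (p`_i) => [[|[|[|[|k]]]] H] //; exact/val_inj.
Qed.
Lemma redp_two p : redp (p *+ 2) = 0.
Proof. by rewrite mulr2n redpD -mulr2n F2_two. Qed.
Lemma redp0_two p : redp p = 0 -> p *+ 2 = 0.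
Proof.
move=> H; apply/polyP => i; have := congr1 (fun q : {poly 'F_2} => q`_i) H.
rewrite /redp coef_map coefMn !coef0 /=.
move: (p`_i) => [[|[|[|[|k]]]] Hk] // E; apply/val_inj => //; move/(congr1 val): E => //.
Qed.
Definition liftp (u : {poly 'F_2}) : {poly 'Z_4} := map_poly (fun x : 'F_2 => (val x)%:R) u.
Lemma redp_lift u : redp (liftp u) = u.
Proof.
apply/polyP => i; rewrite /redp /liftp coef_map coef_map_id0 //=.
move: (u`_i) => [[|[|k]] H] //; exact/val_inj.
Qed.

Lemma F2_bezout (beta : nat) (x y z : {poly 'F_2}) : odd beta ->
  x * y * z = 'X^beta - 1 -> exists u v, u * y + v * z = 1.
Proof.
move=> ob E.
have b0 : (0 < beta)%N by move: ob; case: (beta).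
set d := gcdp y z.
have dy : d %| y := dvdp_gcdl y z.
have dz : d %| z := dvdp_gcdr y z.
have dP : d %| 'X^beta - 1 by rewrite -E dvdp_mull.
have dP' : d %| 'X^(beta.-1).
  have -> : ('X^(beta.-1) : {poly 'F_2}) = ('X^beta - 1)^`().
    rewrite derivB -polyC1 derivC subr0 derivXn.
    rewrite -{3}(odd_double_half beta) ob mulrnDr -muln2 mulrnA F2_two.
    by rewrite addr0.
  rewrite -E !derivM.
  apply: dvdp_add; [exact: dvdp_mull | exact: dvdp_mulr (dvdp_mull _ dy)].

have d1 : d %| 1.
  have := dvdp_sub dP (dvdp_mull 'X dP').
  by rewrite -exprS prednK // addrAC subrr add0r dvdpNr.
have : coprimep y z by rewrite coprimep_def -dvdp1.
case/Bezout_coprimepP => [[u v]] /=; rewrite -size_poly_eq1.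
case/size_poly1P => c c0 E2; exists u, v; rewrite E2.
by move: c c0 {E2} => [[|[|k]] H] // _; rewrite -polyC1; congr (_%:P); apply/val_inj.
Qed.
Lemma in_code2 alpha beta (u w : {poly 'F_2} * {poly 'Z_4}) v :
  in_code alpha beta [:: u; w] v <->
  exists c0 c1 q2 q4, v.1 = redp c0 * u.1 + redp c1 * w.1 + q2 * ('X^alpha - 1)
    /\ v.2 = c0 * u.2 + c1 * w.2 + q4 * ('X^beta - 1).
Proof.
split.
  move=> [c [[q2 E1] [q4 E2]]]; exists (c 0%N), (c 1%N), q2, q4.
  by move: E1 E2; rewrite !big_ord_recr !big_ord0 /= !add0r => -> ->.
move=> [c0 [c1 [q2 [q4 [E1 E2]]]]]; exists (fun i => nth 0 [:: c0; c1] i).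
by split; [exists q2|exists q4]; rewrite !big_ord_recr !big_ord0 /= !add0r.
Qed.

Lemma in_code3 alpha beta (u w t : {poly 'F_2} * {poly 'Z_4}) v :
  in_code alpha beta [:: u; w; t] v <->
  exists c0 c1 c2 q2 q4,
    v.1 = redp c0 * u.1 + redp c1 * w.1 + redp c2 * t.1 + q2 * ('X^alpha - 1)
    /\ v.2 = c0 * u.2 + c1 * w.2 + c2 * t.2 + q4 * ('X^beta - 1).
Proof.
split.
  move=> [c [[q2 E1] [q4 E2]]]; exists (c 0%N), (c 1%N), (c 2%N), q2, q4.
  by move: E1 E2; rewrite !big_ord_recr !big_ord0 /= !add0r => -> ->.
move=> [c0 [c1 [c2 [q2 [q4 [E1 E2]]]]]]; exists (fun i => nth 0 [:: c0; c1; c2] i).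
by split; [exists q2|exists q4]; rewrite !big_ord_recr !big_ord0 /= !add0r.
Qed.

Theorem mainTheorem5 (alpha beta : nat) (f h g : {poly 'Z_4})
  (b l : {poly 'F_2}) :
  (0 < alpha)%N -> odd beta ->
  f * h * g = 'X^beta - 1 ->
  b %| 'X^alpha - 1 ->
  exists l' : {poly 'F_2},
    code_eq alpha beta
      [:: (b, 0); (l, f * h + f *+ 2)]
      [:: (b, 0); (l * redp g, (f * g) *+ 2); (l', f * h)].
Proof.
move=> _ ob Efhg _.
have Ered : redp f * redp h * redp g = 'X^beta - 1.
  by rewrite -!redpM Efhg redpB redpXn redp1.
have [u [v Euv]] := F2_bezout _ _ _ _ ob Ered.
set a := liftp u; set c := liftp v.
have ra : redp a = u by exact: redp_lift.
have rc : redp c = v by exact: redp_lift.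
have HD : (f*h*a + f*g*c) *+ 2 - f *+ 2 = 0.
  have H2 : (a*h + c*g - 1) *+ 2 = 0.
    by apply: redp0_two; rewrite redpB redpD !redpM ra rc Euv redp1 subrr.
  have -> : (f*h*a + f*g*c) *+ 2 - f *+ 2 = f * ((a*h + c*g - 1) *+ 2) by ring.
  by rewrite H2 mulr0.
exists (l - l * v * redp g) => w; rewrite in_code2 in_code3; split.
  move=> [c0 [c1 [q2 [q4 [E1 E2]]]]].
  exists c0, (c1 * c), (c1 * (1 + a *+ 2)), q2, q4; split.
    rewrite E1 /= !redpM redpD redp1 redp_two rc; congr (_ + _); ring.
  rewrite E2 /=; congr (_ + _); apply/eqP; rewrite -subr_eq0; apply/eqP.
  have -> : c0 * 0 + c1 * (f * h + f *+ 2) -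
    (c0 * 0 + c1 * c * ((f * g) *+ 2) + c1 * (1 + a *+ 2) * (f * h)) =
    - c1 * ((f*h*a + f*g*c) *+ 2 - f *+ 2) by ring.
  by rewrite HD mulr0.
move=> [d0 [d1 [d2 [q2 [q4 [E1 E2]]]]]].
exists d0, (d1 * g + d2 * (1 + a *+ 2 - c * g)), q2, (q4 - d1 + d2 * c); split.
  rewrite E1 /= redpD !redpM redpB redpD redp1 redp_two !redpM rc; congr (_ + _); ring.
rewrite E2 /= -Efhg; apply/eqP; rewrite -subr_eq0; apply/eqP.
have -> : d0 * 0 + d1 * ((f * g) *+ 2) + d2 * (f * h) + q4 * (f * h * g) -
  (d0 * 0 + (d1 * g + d2 * (1 + a *+ 2 - c * g)) * (f * h + f *+ 2) +
   (q4 - d1 + d2 * c) * (f * h * g)) =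
  d2 * ((f*h*a + f*g*c) *+ 2 - f *+ 2) - d2 * ((f*h*a + a*f) *+ 4) by ring.
by rewrite HD Z4_four !mulr0 subrr.
Qed.
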